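(* Let $\omega$ be a circle with center $O$ and $\xi$ an ellipse with center $O$ lying inside $\omega$. Let $(u_1,\dots,u_n)$ be a Poncelet $n$-gon for the pair $(\omega,\xi)$. Then $\sum_{i=1}^n\cos\angle u_iOu_{i+1}$ is constant in the Poncelet family of $n$-gons containing $(u_1,\dots,u_n)$.
   Context: Indices are mod $n$. A Poncelet $n$-gon for a pair of conics $(C,D)$, $D$ inside $C$, is a closed polygon with all vertices on $C$ and all sides tangent to $D$. By the Poncelet porism, if one such closed $n$-gon exists, then starting from any point of $C$ and successively drawing tangent lines to $D$ (in the same rotational sense) produces a closed $n$-gon; the Poncelet family is this continuous 1-parameter family. $\angle u_iOu_{i+1}\in[0,\pi]$ is the angle between the vectors $u_i-O$ and $u_{i+1}-O$. *)

(* Defs.v *)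
From Stdlib Require Import Reals Lra.
Open Scope R_scope.

Definition point := (R * R)%type.

Definition vsub (p q : point) : point := (fst p - fst q, snd p - snd q).
Definition dot (p q : point) : R := fst p * fst q + snd p * snd q.
Definition cross (p q : point) : R := fst p * snd q - snd p * fst q.
Definition vnorm (p : point) : R := sqrt (dot p p).

Definition angle (A O B : point) : R :=
  acos (dot (vsub A O) (vsub B O) / (vnorm (vsub A O) * vnorm (vsub B O))).

Definition on_circle (O : point) (r : R) (p : point) : Prop :=
  vnorm (vsub p O) = r.

Definition is_ellipse_params (a b c : R) : Prop := 0 < a /\ 0 < a * c - b * b.

Definition on_ellipse (O : point) (a b c : R) (p : point) : Prop :=
  let X := fst p - fst O in let Y := snd p - snd O in
  a * X * X + 2 * b * X * Y + c * Y * Y = 1.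

Definition ellipse_inside_circle (O : point) (a b c r : R) : Prop :=
  forall p, on_ellipse O a b c p -> vnorm (vsub p O) < r.

Definition tangent_line (O : point) (a b c : R) (p q : point) : Prop :=
  p <> q /\
  exists! t : R, on_ellipse O a b c (fst p + t * (fst q - fst p),
                                     snd p + t * (snd q - snd p)).

(* (u_0, ..., u_{n-1}) (indices mod n) is a Poncelet n-gon for the pair
   (circle(O,r), ellipse(O,a,b,c)): vertices on the circle, sides tangent to
   the ellipse, and consecutive sides are distinct tangent lines, i.e. the
   polygon is obtained by successively drawing the *other* tangent line
   (no back-tracking u_{i+2} = u_i). *)
Definition poncelet_ngon (O : point) (r a b c : R) (n : nat) (u : nat -> point)
  : Prop :=
  forall i, (i < n)%nat ->
    on_circle O r (u i) /\
    tangent_line O a b c (u i) (u (S i mod n)) /\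
    u i <> u (S (S i) mod n).

(* v belongs to the Poncelet family of u: v is a Poncelet n-gon for the same
   pair, traversed in the same rotational sense about O as u. *)
Definition in_poncelet_family (O : point) (r a b c : R) (n : nat)
  (u v : nat -> point) : Prop :=
  poncelet_ngon O r a b c n v /\
  0 < cross (vsub (u 0%nat) O) (vsub (u (1 mod n)%nat) O) *
      cross (vsub (v 0%nat) O) (vsub (v (1 mod n)%nat) O).

Definition cos_angle_sum (O : point) (n : nat) (u : nat -> point) : R :=
  sum_f_R0 (fun i => cos (angle (u i) O (u (S i mod n)))) (pred n).

(* Main.v *)
Require Import Defs.
From Stdlib Require Import Reals Lra Nsatz ZArith Lia.
From Coquelicot Require Import Coquelicot.
Open Scope R_scope.


Lemma angle_exists r x y : 0 < r -> x*x+y*y = r*r -> exists a, r * cos a = x /\ r * sin a = y.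
Proof.
  intros Hr H. set (t := x / r).
  assert (Ht: x = r * t) by (unfold t; field; lra).
  assert (Hb: -1 <= t <= 1).
  { assert (t*t <= 1). { rewrite Ht in H. assert (r*r*(t*t) <= r*r*1) by nra. assert (0 < r*r) by nra. nra. } nra. }
  assert (Hs: sqrt (1 - t²) * sqrt (1 - t²) = 1 - t*t).
  { rewrite sqrt_sqrt; unfold Rsqr; nra. }
  assert (Hs0: 0 <= sqrt (1 - t²)) by apply sqrt_pos.
  assert (Hy: y*y = (r * sqrt (1 - t²))*(r * sqrt (1 - t²))).
  { replace ((r * sqrt (1 - t²))*(r * sqrt (1 - t²))) with (r*r*(sqrt (1 - t²) * sqrt (1 - t²))) by ring.
    rewrite Hs. nra. }
  destruct (Rle_or_lt 0 y) as [Hy0|Hy0].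
  - exists (acos t). rewrite cos_acos, sin_acos by exact Hb. split; [lra|].
    assert (0 <= r * sqrt (1 - t²)) by nra. nra.
  - exists (- acos t). rewrite cos_neg, sin_neg, cos_acos, sin_acos by exact Hb. split; [lra|].
    assert (0 <= r * sqrt (1 - t²)) by nra. nra.
Qed.

Lemma angle_eq a b : cos a = cos b -> sin a = sin b -> exists k : Z, a = b + 2 * PI * IZR k.
Proof.
  intros Hc Hs.
  assert (Hd: cos (a - b) = 1).
  { unfold Rminus. rewrite cos_plus, cos_neg, sin_neg, Hc, Hs. pose proof (sin2_cos2 b). unfold Rsqr in *. lra. }
  assert (Hh: sin ((a - b)/2) = 0).
  { replace (a - b) with (2 * ((a-b)/2)) in Hd by field. rewrite cos_2a_sin in Hd.
    assert (sin ((a - b) / 2) * sin ((a - b) / 2) = 0) by lra. nra. }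
  destruct (sin_eq_0_0 _ Hh) as [k Hk]. exists k. lra.
Qed.

Lemma rot_lemma (F : R -> R) (T : R) : 0 < T -> (forall a b, a <= b -> F a <= F b) ->
  (forall x, F (x + T) = F x + T) ->
  forall x y (m1 m2 : Z), F x = x + T * IZR m1 -> F y = y + T * IZR m2 -> m1 = m2.
Proof.
  intros HT Hm Hp.
  assert (HpZ: forall x (k : Z), F (x + T * IZR k) = F x + T * IZR k).
  { assert (Hn: forall x (k : nat), F (x + T * INR k) = F x + T * INR k).
    { intros x k. induction k as [|k IH].
      - simpl. rewrite !Rmult_0_r, !Rplus_0_r. reflexivity.
      - rewrite S_INR. replace (x + T * (INR k + 1)) with ((x + T * INR k) + T) by ring.
        rewrite Hp, IH. ring. }
    intros x k. destruct k as [|p|p].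
    - simpl. rewrite !Rmult_0_r, !Rplus_0_r. reflexivity.
    - rewrite <- positive_nat_Z, <- INR_IZR_INZ. apply Hn.
    - rewrite <- Pos2Z.opp_pos, opp_IZR, <- positive_nat_Z, <- INR_IZR_INZ.
      specialize (Hn (x + T * - INR (Pos.to_nat p)) (Pos.to_nat p)).
      replace (x + T * - INR (Pos.to_nat p) + T * INR (Pos.to_nat p)) with x in Hn by ring. lra. }
  intros x y m1 m2 H1 H2.
  set (k := Int_part ((y - x) / T)).
  destruct (base_Int_part ((y - x) / T)) as [B1 B2]. fold k in B1, B2.
  set (y' := y + T * IZR (- k)).
  assert (Hy': F y' = y' + T * IZR m2). { unfold y'. rewrite HpZ, H2. ring. }
  assert (Hd1: x <= y').
  { unfold y'. rewrite opp_IZR. assert (IZR k * T <= y - x).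
    { apply Rmult_le_reg_r with (/T). apply Rinv_0_lt_compat; lra.
      replace (IZR k * T * / T) with (IZR k) by (field; lra). exact B1. }
    lra. }
  assert (Hd2: y' < x + T).
  { unfold y'. rewrite opp_IZR. assert (y - x < (IZR k + 1) * T).
    { apply Rmult_lt_reg_r with (/T). apply Rinv_0_lt_compat; lra.
      replace ((IZR k + 1) * T * / T) with (IZR k + 1) by (field; lra).
      replace ((y - x) * / T) with ((y - x) / T) by reflexivity. lra. }
    lra. }
  pose proof (Hm _ _ Hd1) as M1. assert (M2: F y' <= F (x + T)) by (apply Hm; lra).
  rewrite Hp in M2. rewrite Hy', H1 in M1. rewrite Hy', H1 in M2.
  assert (Z1: IZR m1 - IZR m2 < 1).
  { apply Rmult_lt_reg_l with T; lra. }
  assert (Z2: IZR m2 - IZR m1 <= 1).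
  { apply Rmult_le_reg_l with T; lra. }
  rewrite <- minus_IZR in Z1, Z2.
  apply lt_IZR in Z1. apply le_IZR in Z2.
  destruct (Z.eq_dec (m2 - m1) 1) as [E|E]; [|lia].
  exfalso. assert (IZR m2 - IZR m1 = 1) by (rewrite <- minus_IZR, E; reflexivity).
  assert (Hyx: y' = x) by nra. rewrite Hyx in Hy'. rewrite H1 in Hy'.
  assert (T * (IZR m1 - IZR m2) = 0) by lra.
  assert (IZR m1 - IZR m2 = 0) by (apply Rmult_integral in H0; lra). lra.
Qed.

Lemma deriv0_const (f : R -> R) : (forall x, is_derive f x 0) -> forall a b, f a = f b.
Proof.
  intros Hd a b.
  assert (Hc: forall x, continuity_pt f x).
  { intro x. apply continuity_pt_filterlim.
    exact (@ex_derive_continuous R_AbsRing R_NormedModule f x (ex_intro _ 0 (Hd x))). }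
  destruct (MVT_gen f a b (fun _ => 0)) as [c [_ Hc2]].
  - intros; apply Hd.
  - intros; apply Hc.
  - lra.
Qed.

Lemma deriv_nondecr (f df : R -> R) : (forall x, is_derive f x (df x)) -> (forall x, 0 <= df x) ->
  forall a b, a <= b -> f a <= f b.
Proof.
  intros Hd Hp a b Hab.
  assert (Hc: forall x, continuity_pt f x).
  { intro x. apply continuity_pt_filterlim.
    exact (@ex_derive_continuous R_AbsRing R_NormedModule f x (ex_intro _ _ (Hd x))). }
  destruct (MVT_gen f a b df) as [c [_ Hc2]].
  - intros; apply Hd.
  - intros; apply Hc.
  - specialize (Hp c). nra.
Qed.

Section Core.
Variables n11 n12 n22 K r : R.
Hypothesis Hr : 0 < r.
Definition Pq (x y : R) := x*(n11*x+n12*y)+y*(n12*x+n22*y).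
Hypothesis HP : forall x y, x*x+y*y = r*r -> 0 < Pq x y /\ K*K < Pq x y * Pq x y.

Definition mx (x y : R) := n11*x+n12*y.
Definition my (x y : R) := n12*x+n22*y.
Definition nnp (x y : R) := mx x y * mx x y + my x y * my x y.
Definition ssp (x y : R) := sqrt (r*r*nnp x y - K*K).
Definition Wx (x y : R) := (K * mx x y - ssp x y * my x y) / nnp x y.
Definition Wy (x y : R) := (K * my x y + ssp x y * mx x y) / nnp x y.
Definition Dd (x y x' y' : R) := x' * my x y - y' * mx x y.

Lemma nnp_pos x y : x*x+y*y = r*r -> 0 < nnp x y.
Proof.
  intro H. destruct (HP x y H) as [H1 _].
  assert (E: Pq x y = x * mx x y + y * my x y) by (unfold Pq, mx, my; ring).
  unfold nnp. set (a := mx x y) in *. set (b := my x y) in *.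
  destruct (Rle_or_lt (a*a+b*b) 0) as [Hle|]; [|lra].
  assert (a = 0) by nra. assert (b = 0) by nra. subst a b. rewrite E in H1.
  rewrite H0, H2 in H1. lra.
Qed.

Lemma sarg_pos x y : x*x+y*y = r*r -> 0 < r*r*nnp x y - K*K.
Proof.
  intro H. destruct (HP x y H) as [H1 H2].
  assert (E: Pq x y = x * mx x y + y * my x y) by (unfold Pq, mx, my; ring).
  unfold nnp. rewrite E in *. set (a := mx x y) in *. set (b := my x y) in *.
  assert (Hc: (x*a+y*b)*(x*a+y*b) + (x*b-y*a)*(x*b-y*a) = (x*x+y*y)*(a*a+b*b)) by ring.
  rewrite H in Hc. assert (0 <= (x*b-y*a)*(x*b-y*a)) by apply Rle_0_sqr. lra.
Qed.

Lemma ssp_sq x y : x*x+y*y = r*r -> ssp x y * ssp x y = r*r*nnp x y - K*K.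
Proof. intro H. unfold ssp. apply sqrt_sqrt. left. now apply sarg_pos. Qed.

Lemma ssp_pos x y : x*x+y*y = r*r -> 0 < ssp x y.
Proof. intro H. unfold ssp. apply sqrt_lt_R0. now apply sarg_pos. Qed.

Lemma W_circle x y : x*x+y*y = r*r -> Wx x y * Wx x y + Wy x y * Wy x y = r*r.
Proof.
  intro H. pose proof (nnp_pos x y H) as HN. pose proof (ssp_sq x y H) as HS.
  unfold Wx, Wy. unfold nnp in *. set (s := ssp x y) in *. set (a := mx x y) in *. set (b := my x y) in *.
  replace ((K * a - s * b) / (a * a + b * b) * ((K * a - s * b) / (a * a + b * b)) +
    (K * b + s * a) / (a * a + b * b) * ((K * b + s * a) / (a * a + b * b))) with ((K*K + s*s)/(a*a+b*b)) by (field; lra).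
  rewrite HS. field. lra.
Qed.

Definition bil (x y x' y' : R) := x' * mx x y + y' * my x y.

Lemma bil_sym x y x' y' : bil x y x' y' = bil x' y' x y.
Proof. unfold bil, mx, my. ring. Qed.

Lemma W_line x y : x*x+y*y = r*r -> bil x y (Wx x y) (Wy x y) = K.
Proof.
  intro H. pose proof (nnp_pos x y H) as HN. unfold bil, Wx, Wy. unfold nnp in *.
  set (s := ssp x y) in *. set (a := mx x y) in *. set (b := my x y) in *. field. lra.
Qed.

Lemma W_D x y : x*x+y*y = r*r -> Dd x y (Wx x y) (Wy x y) = - ssp x y.
Proof.
  intro H. pose proof (nnp_pos x y H) as HN. unfold Dd, Wx, Wy. unfold nnp in *.
  set (s := ssp x y) in *. set (a := mx x y) in *. set (b := my x y) in *. field. lra.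
Qed.

Lemma Dd_sq x y x' y' : x'*x'+y'*y' = r*r -> bil x y x' y' = K ->
  Dd x y x' y' * Dd x y x' y' = r*r*nnp x y - K*K.
Proof.
  intros H1 H2. unfold bil, Dd, nnp in *. rewrite <- H2, <- H1. ring.
Qed.

Lemma sign_lemma x y x' y' : x*x+y*y = r*r -> x'*x'+y'*y' = r*r -> bil x y x' y' = K ->
  Dd x y x' y' * (x*y' - y*x') < 0.
Proof.
  intros H1 H2 H3. destruct (HP x y H1) as [HP1 HP2].
  pose proof (nnp_pos x y H1) as HN.
  assert (E: 2 * Pq x y * Dd x y x' y' * (y*x'-x*y') =
     (y*x'-x*y')*(y*x'-x*y')*nnp x y + r*r*(Pq x y * Pq x y - K*K)).
  { clear HP HP1 HP2 HN. unfold Pq, Dd, nnp, bil, mx, my in *. nsatz. }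
  assert (0 < (y*x'-x*y')*(y*x'-x*y')*nnp x y + r*r*(Pq x y * Pq x y - K*K)).
  { assert (0 <= (y*x'-x*y')*(y*x'-x*y')) by apply Rle_0_sqr.
    assert (0 < r*r) by nra. assert (0 <= (y*x'-x*y')*(y*x'-x*y')*nnp x y) by nra. nra. }
  assert (0 < Dd x y x' y' * (y*x'-x*y')) by nra.
  nra.
Qed.

Lemma decomp x y x' y' : x*x+y*y = r*r -> bil x y x' y' = K ->
  x' = (K * mx x y + Dd x y x' y' * my x y) / nnp x y /\
  y' = (K * my x y - Dd x y x' y' * mx x y) / nnp x y.
Proof.
  intros H1 H2. pose proof (nnp_pos x y H1) as HN. rewrite <- H2.
  unfold bil, Dd, nnp in *. set (a := mx x y) in *. set (b := my x y) in *.
  split; field; lra.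
Qed.

Lemma W_uniq x y x' y' : x*x+y*y = r*r -> x'*x'+y'*y' = r*r -> bil x y x' y' = K ->
  0 < x*y' - y*x' -> x' = Wx x y /\ y' = Wy x y.
Proof.
  intros H1 H2 H3 H4. pose proof (sign_lemma x y x' y' H1 H2 H3) as Hs.
  assert (Ht: Dd x y x' y' < 0) by nra.
  pose proof (Dd_sq x y x' y' H2 H3) as Hq. pose proof (ssp_sq x y H1) as Hq2.
  pose proof (ssp_pos x y H1) as Hsp.
  assert (Dd x y x' y' = - ssp x y) by nra.
  destruct (decomp x y x' y' H1 H3) as [E1 E2].
  rewrite H in E1, E2. unfold Wx, Wy. split; [rewrite E1 | rewrite E2]; unfold Rdiv; ring.
Qed.

Lemma Dd_opp x y x' y' x'' y'' : x*x+y*y = r*r -> x'*x'+y'*y' = r*r -> x''*x''+y''*y'' = r*r ->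
  bil x y x' y' = K -> bil x y x'' y'' = K -> (x' <> x'' \/ y' <> y'') ->
  Dd x y x'' y'' = - Dd x y x' y'.
Proof.
  intros H1 H2 H3 H4 H5 H6.
  pose proof (Dd_sq x y x' y' H2 H4) as Q1. pose proof (Dd_sq x y x'' y'' H3 H5) as Q2.
  destruct (decomp x y x' y' H1 H4) as [E1 E2].
  destruct (decomp x y x'' y'' H1 H5) as [E3 E4].
  assert (Hf: (Dd x y x'' y'' - Dd x y x' y') * (Dd x y x'' y'' + Dd x y x' y') = 0) by nra.
  destruct (Rmult_integral _ _ Hf) as [Z|Z]; [|lra].
  exfalso. assert (Dd x y x'' y'' = Dd x y x' y') by lra.
  rewrite H in E3, E4. destruct H6; congruence.
Qed.

Lemma W_cross x y : x*x+y*y = r*r -> 0 < x * Wy x y - y * Wx x y.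
Proof.
  intro H. pose proof (sign_lemma x y _ _ H (W_circle x y H) (W_line x y H)) as S.
  rewrite W_D in S by exact H. pose proof (ssp_pos x y H). nra.
Qed.

Definition U0 a := r * cos a.
Definition U1 a := r * sin a.
Definition W0 a := Wx (U0 a) (U1 a).
Definition W1 a := Wy (U0 a) (U1 a).
Definition XX a := r*r + (U0 a * W0 a + U1 a * W1 a).
Definition YY a := U0 a * W1 a - U1 a * W0 a.
Definition beta a := a + 2 * atan (YY a / XX a).

Lemma U_circle a : U0 a * U0 a + U1 a * U1 a = r*r.
Proof. unfold U0, U1. pose proof (sin2_cos2 a). unfold Rsqr in *. nra. Qed.

Lemma YY_pos a : 0 < YY a.
Proof. apply W_cross, U_circle. Qed.

Lemma XX_pos a : 0 < XX a.
Proof.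
  pose proof (YY_pos a). pose proof (U_circle a) as H1. pose proof (W_circle _ _ (U_circle a)) as H2.
  unfold XX, YY, W0, W1 in *. set (p := U0 a) in *. set (q := U1 a) in *.
  set (w0 := Wx p q) in *. set (w1 := Wy p q) in *.
  assert (E: (p*w0+q*w1)*(p*w0+q*w1) + (p*w1-q*w0)*(p*w1-q*w0) = (r*r)*(r*r)).
  { replace ((r*r)*(r*r)) with ((p*p+q*q)*(w0*w0+w1*w1)) by (rewrite H1, H2; ring). ring. }
  assert (0 < r*r) by nra.
  destruct (Rle_or_lt (r * r + (p * w0 + q * w1)) 0); [|lra].
  assert ((p*w0+q*w1)*(p*w0+q*w1) >= (r*r)*(r*r)) by nra. nra.
Qed.

Lemma ha_alg (X Y e r2 : R): X = r2 + e -> e*e + Y*Y = r2*r2 -> 0 < X -> 0 < r2 ->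
  (1 - (Y/X)*(Y/X))/(1+(Y/X)*(Y/X)) = e/r2 /\ 2*(Y/X)/(1+(Y/X)*(Y/X)) = Y/r2.
Proof.
  intros H1 H2 H3 H4.
  assert (HD: 0 < X*X + Y*Y) by nra.
  replace ((1 - (Y/X)*(Y/X))/(1+(Y/X)*(Y/X))) with ((X*X - Y*Y)/(X*X+Y*Y)) by (field; lra).
  replace (2*(Y/X)/(1+(Y/X)*(Y/X))) with (2*Y*X/(X*X+Y*Y)) by (field; lra).
  replace (Y*Y) with (r2*r2-e*e) in * by lra. subst X.
  split; field; nra.
Qed.

Lemma half_angle t : cos (2 * atan t) = (1 - t*t)/(1+t*t) /\ sin (2 * atan t) = 2*t/(1+t*t).
Proof.
  assert (Hp: 0 < 1 + t*t) by nra.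
  assert (Hs: sqrt (1 + t²) * sqrt (1 + t²) = 1 + t*t).
  { rewrite sqrt_sqrt; unfold Rsqr; lra. }
  assert (Hs0: sqrt (1 + t²) <> 0). { intro Z. rewrite Z in Hs. lra. }
  rewrite cos_2a_sin, sin_2a, sin_atan, cos_atan. set (s := sqrt (1 + t²)) in *. split.
  - replace (1 - 2 * (t / s) * (t / s)) with (1 - 2 * (t*t) / (s*s)) by (field; exact Hs0).
    rewrite Hs. field. lra.
  - replace (2 * (t / s) * (1 / s)) with (2 * t / (s*s)) by (field; exact Hs0).
    rewrite Hs. reflexivity.
Qed.

Lemma beta_U a : U0 (beta a) = W0 a /\ U1 (beta a) = W1 a.
Proof.
  pose proof (XX_pos a) as HX. pose proof (YY_pos a) as HY.
  pose proof (U_circle a) as H1. pose proof (W_circle _ _ (U_circle a)) as H2.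
  destruct (half_angle (YY a / XX a)) as [C S].
  assert (Hr2 : 0 < r * r) by nra.
  assert (E: (U0 a*W0 a+U1 a*W1 a)*(U0 a*W0 a+U1 a*W1 a) + YY a * YY a = (r*r)*(r*r)).
  { unfold YY. replace ((r*r)*(r*r)) with ((U0 a*U0 a+U1 a*U1 a)*(W0 a*W0 a+W1 a*W1 a))
      by (unfold W0, W1; rewrite H1, H2; ring). ring. }
  destruct (ha_alg (XX a) (YY a) (U0 a*W0 a+U1 a*W1 a) (r*r) eq_refl E HX Hr2) as [C' S'].
  replace ((YY a / XX a) * (YY a / XX a)) with (YY a / XX a * (YY a / XX a)) in * by reflexivity.
  pose proof (eq_trans C C') as C2. pose proof (eq_trans S S') as S2. clear C S. rename C2 into C. rename S2 into S.
  unfold beta, U0 at 1, U1 at 1. rewrite cos_plus, sin_plus, C, S.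
  assert (Hp: U0 a = r * cos a) by reflexivity. assert (Hq: U1 a = r * sin a) by reflexivity.
  unfold YY in *. clear Hp Hq C S C' S'.
  unfold W0, W1 in *. set (p := U0 a) in *. set (q := U1 a) in *.
  set (w0 := Wx p q) in *. set (w1 := Wy p q) in *.
  split.
  - replace (r * (cos a * ((p * w0 + q * w1) / (r * r)) - sin a * ((p * w1 - q * w0) / (r * r))))
      with ((p * ((p * w0 + q * w1)) - q * ((p * w1 - q * w0)))/(r*r)) by (unfold p, q, U0, U1; field; lra).
    rewrite <- H1. field. lra.
  - replace (r * (sin a * ((p * w0 + q * w1) / (r * r)) + cos a * ((p * w1 - q * w0) / (r * r))))
      with ((q * ((p * w0 + q * w1)) + p * ((p * w1 - q * w0)))/(r*r)) by (unfold p, q, U0, U1; field; lra).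
    rewrite <- H1. field. lra.
Qed.

Lemma dU0 x : is_derive U0 x (- U1 x).
Proof. unfold U0, U1. auto_derive; auto. ring. Qed.
Lemma dU1 x : is_derive U1 x (U0 x).
Proof. unfold U0, U1. auto_derive; auto. ring. Qed.
Lemma DU0 x : Derive U0 x = - U1 x.
Proof. apply is_derive_unique, dU0. Qed.
Lemma DU1 x : Derive U1 x = U0 x.
Proof. apply is_derive_unique, dU1. Qed.
Lemma exU0 x : ex_derive U0 x. Proof. eexists; apply dU0. Qed.
Lemma exU1 x : ex_derive U1 x. Proof. eexists; apply dU1. Qed.

Lemma ex_W0 x : ex_derive W0 x.
Proof.
  pose proof (nnp_pos _ _ (U_circle x)) as H1. pose proof (sarg_pos _ _ (U_circle x)) as H2.
  unfold W0, Wx, ssp, nnp, mx, my in *. auto_derive; repeat split; auto using exU0, exU1; lra.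
Qed.
Lemma ex_W1 x : ex_derive W1 x.
Proof.
  pose proof (nnp_pos _ _ (U_circle x)) as H1. pose proof (sarg_pos _ _ (U_circle x)) as H2.
  unfold W1, Wy, ssp, nnp, mx, my in *. auto_derive; repeat split; auto using exU0, exU1; lra.
Qed.
Lemma ex_beta x : ex_derive beta x.
Proof.
  pose proof (XX_pos x) as H1.
  unfold beta, XX, YY in *. auto_derive; repeat split; auto using exU0, exU1, ex_W0, ex_W1; lra.
Qed.

Lemma bil_beta a : bil (U0 a) (U1 a) (U0 (beta a)) (U1 (beta a)) = K.
Proof. destruct (beta_U a) as [E1 E2]. rewrite E1, E2. apply W_line, U_circle. Qed.

Lemma dbeta_eq a : Derive beta a * Dd (U0 a) (U1 a) (W0 a) (W1 a) + Dd (W0 a) (W1 a) (U0 a) (U1 a) = 0.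
Proof.
  set (F := fun a => bil (U0 a) (U1 a) (U0 (beta a)) (U1 (beta a))).
  assert (H0: is_derive F a 0).
  { apply is_derive_ext with (f := fun _ => K). intro t. unfold F. now rewrite bil_beta.
    auto_derive; auto. }
  assert (H1: is_derive F a (Derive beta a * Dd (U0 a) (U1 a) (W0 a) (W1 a) + Dd (W0 a) (W1 a) (U0 a) (U1 a))).
  { unfold F, bil, mx, my. auto_derive.
    - repeat split; auto using exU0, exU1, ex_beta.
    - rewrite !DU0, !DU1. destruct (beta_U a) as [E1 E2]. rewrite E1, E2.
      unfold Dd, mx, my. change (fun x : R => beta x) with beta. ring. }
  pose proof (is_derive_unique _ _ _ H0). pose proof (is_derive_unique _ _ _ H1). congruence.
Qed.

Lemma Dd_WU_pos a : 0 < Dd (W0 a) (W1 a) (U0 a) (U1 a).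
Proof.
  pose proof (U_circle a) as H1. pose proof (W_circle _ _ H1) as H2.
  pose proof (sign_lemma (W0 a) (W1 a) (U0 a) (U1 a) H2 H1) as S.
  rewrite bil_sym in S. specialize (S (W_line _ _ H1)).
  pose proof (YY_pos a). assert (E: W0 a * U1 a - W1 a * U0 a = - YY a) by (unfold YY; ring).
  rewrite E in S. set (d := Dd (W0 a) (W1 a) (U0 a) (U1 a)) in *. set (y := YY a) in *. nra.
Qed.

Lemma dbeta_val a : Derive beta a = Dd (W0 a) (W1 a) (U0 a) (U1 a) / ssp (U0 a) (U1 a).
Proof.
  pose proof (dbeta_eq a) as E. unfold W0, W1 in *. rewrite W_D in E by apply U_circle.
  pose proof (ssp_pos _ _ (U_circle a)).
  set (s := ssp (U0 a) (U1 a)) in *. set (d := Derive beta a) in *.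
  set (D := Dd (Wx (U0 a) (U1 a)) (Wy (U0 a) (U1 a)) (U0 a) (U1 a)) in *.
  assert (d * s = D) by lra. rewrite <- H0. field. lra.
Qed.

Lemma dbeta_pos a : 0 < Derive beta a.
Proof.
  rewrite dbeta_val. pose proof (ssp_pos _ _ (U_circle a)). pose proof (Dd_WU_pos a).
  apply Rdiv_lt_0_compat; lra.
Qed.

Definition phi a := - (r*r) * Pq (U0 a) (U1 a) / ssp (U0 a) (U1 a).

Lemma ex_phi x : ex_derive phi x.
Proof.
  pose proof (sarg_pos _ _ (U_circle x)) as H2.
  unfold phi, Pq, ssp, nnp, mx, my in *. auto_derive; repeat split; auto using exU0, exU1; try lra.
  apply Rgt_not_eq, sqrt_lt_R0. exact H2.
Qed.

Lemma cont_phi x : continuous phi x.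
Proof. exact (@ex_derive_continuous R_AbsRing R_NormedModule phi x (ex_phi x)). Qed.

Definition PhiR x := RInt phi 0 x.
Definition Phi (x : R) : R := PhiR x.

Lemma dPhiR x : is_derive PhiR x (phi x).
Proof.
  apply is_derive_RInt with (a := 0).
  - apply filter_forall. intro b. apply RInt_correct, ex_RInt_continuous. intros; apply cont_phi.
  - apply cont_phi.
Qed.
Lemma dPhi x : is_derive Phi x (phi x).
Proof. exact (dPhiR x). Qed.
Lemma DPhi x : Derive Phi x = phi x.
Proof. apply is_derive_unique, dPhi. Qed.
Lemma exPhi x : ex_derive Phi x.
Proof. eexists; apply dPhi. Qed.

Lemma ssp_W a : ssp (W0 a) (W1 a) = Dd (W0 a) (W1 a) (U0 a) (U1 a).
Proof.
  pose proof (U_circle a) as H1. pose proof (W_circle _ _ H1) as H2.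
  pose proof (W_line _ _ H1) as H3. rewrite bil_sym in H3.
  pose proof (Dd_sq _ _ _ _ H1 H3) as Q. pose proof (Dd_WU_pos a).
  unfold ssp. fold (W0 a) (W1 a) in *. rewrite <- Q. apply sqrt_square. lra.
Qed.

Lemma key_id u0 u1 w0 w1 : u0*u0+u1*u1 = r*r -> w0*w0+w1*w1 = r*r ->
  r*r*(Pq w0 w1 - Pq u0 u1) + (u1*w0 - u0*w1)*(Dd u0 u1 w0 w1 + Dd w0 w1 u0 u1) = 0.
Proof. intros H1 H2. unfold Pq, Dd, mx, my. nsatz. Qed.

Definition Hf a := Phi (beta a) - Phi a - (U0 a * U0 (beta a) + U1 a * U1 (beta a)).

Lemma dHf a : is_derive Hf a 0.
Proof.
  unfold Hf. auto_derive.
  - repeat split; auto using exU0, exU1, ex_beta, exPhi.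
  - change (fun x : R => beta x) with beta.
    rewrite !DPhi, !DU0, !DU1, dbeta_val.
    destruct (beta_U a) as [E1 E2]. unfold phi. rewrite E1, E2, ssp_W.
    pose proof (U_circle a) as H1. pose proof (W_circle _ _ H1) as H2.
    pose proof (W_D _ _ H1) as H3. pose proof (ssp_pos _ _ H1) as H4. pose proof (Dd_WU_pos a) as H5.
    fold (W0 a) (W1 a) in *.
    set (s := ssp (U0 a) (U1 a)) in *. set (D := Dd (W0 a) (W1 a) (U0 a) (U1 a)) in *.
    field_simplify; try lra.
    unfold Rdiv. apply Rmult_eq_0_compat_r.
    replace s with (- Dd (U0 a) (U1 a) (W0 a) (W1 a)) by lra.
    pose proof (key_id _ _ _ _ H1 H2) as KI. unfold D. clear - KI. unfold Dd, Pq, mx, my in *. lra.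
Qed.

Lemma Hf_const a : Hf a = Hf 0.
Proof. apply deriv0_const, dHf. Qed.

Lemma U0_per x : U0 (x + 2*PI) = U0 x.
Proof. unfold U0. rewrite cos_plus, cos_2PI, sin_2PI. ring. Qed.
Lemma U1_per x : U1 (x + 2*PI) = U1 x.
Proof. unfold U1. rewrite sin_plus, cos_2PI, sin_2PI. ring. Qed.

Lemma beta_per x : beta (x + 2*PI) = beta x + 2*PI.
Proof. unfold beta, YY, XX, W0, W1. rewrite !U0_per, !U1_per. ring. Qed.

Lemma phi_per x : phi (x + 2*PI) = phi x.
Proof. unfold phi. rewrite !U0_per, !U1_per. reflexivity. Qed.

Lemma Phi_per x : Phi (x + 2*PI) - Phi x = Phi (2*PI) - Phi 0.
Proof.
  replace (Phi (2*PI)) with (Phi (0 + 2*PI)) by (f_equal; ring).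
  apply (deriv0_const (fun x => Phi (x + 2*PI) - Phi x)). intro y.
  auto_derive.
  - split; [apply exPhi | split; [apply exPhi|auto]].
  - rewrite !DPhi, phi_per. ring.
Qed.

Lemma beta_mono a b : a <= b -> beta a <= beta b.
Proof.
  apply (deriv_nondecr beta (Derive beta)).
  - intro x. apply Derive_correct, ex_beta.
  - intro x. left. apply dbeta_pos.
Qed.

Definition fU a := U0 a * U0 (beta a) + U1 a * U1 (beta a).

Lemma fU_eq a : fU a = Phi (beta a) - Phi a - Hf 0.
Proof. rewrite <- (Hf_const a). unfold Hf, fU. ring. Qed.

Lemma orbit_sum x n : sum_f_R0 (fun i => fU (Nat.iter i beta x)) n =
  Phi (Nat.iter (S n) beta x) - Phi x - INR (S n) * Hf 0.
Proof.
  induction n as [|n IH].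
  - unfold sum_f_R0. change (Nat.iter 1 beta x) with (beta x). change (Nat.iter 0 beta x) with x.
    rewrite fU_eq. simpl INR. ring.
  - simpl sum_f_R0. rewrite IH, fU_eq. rewrite (S_INR (S n)).
    change (beta (Nat.iter n beta x)) with (Nat.iter (S n) beta x).
    change (Nat.iter (S (S n)) beta x) with (beta (Nat.iter (S n) beta x)). ring.
Qed.

Lemma Phi_Z x (k : Z) : Phi (x + 2*PI*IZR k) = Phi x + IZR k * (Phi (2*PI) - Phi 0).
Proof.
  pose proof Phi_per as Pp. set (T := 2*PI) in *. set (c := Phi T - Phi 0) in *.
  assert (Hn: forall x (k : nat), Phi (x + T*INR k) = Phi x + INR k * c).
  { intros y j. induction j as [|j IH].
    - simpl. rewrite Rmult_0_r, Rplus_0_r. ring.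
    - rewrite S_INR. replace (y + T*(INR j + 1)) with ((y + T*INR j) + T) by ring.
      pose proof (Pp (y + T*INR j)). rewrite IH in H. lra. }
  destruct k as [|p|p].
  - simpl. rewrite Rmult_0_r, Rplus_0_r. ring.
  - rewrite <- positive_nat_Z, <- INR_IZR_INZ. apply Hn.
  - rewrite <- Pos2Z.opp_pos, opp_IZR, <- positive_nat_Z, <- INR_IZR_INZ.
    specialize (Hn (x + T * - INR (Pos.to_nat p)) (Pos.to_nat p)).
    replace (x + T * - INR (Pos.to_nat p) + T * INR (Pos.to_nat p)) with x in Hn by ring. lra.
Qed.

Lemma iter_mono n a b : a <= b -> Nat.iter n beta a <= Nat.iter n beta b.
Proof. induction n; simpl; auto. intro H. apply beta_mono. auto. Qed.

Lemma iter_per n x : Nat.iter n beta (x + 2*PI) = Nat.iter n beta x + 2*PI.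
Proof. induction n; simpl; auto. rewrite IHn. apply beta_per. Qed.

Definition good_seq (w : nat -> R*R) := forall i,
  fst (w i) * fst (w i) + snd (w i) * snd (w i) = r*r /\
  bil (fst (w i)) (snd (w i)) (fst (w (S i))) (snd (w (S i))) = K /\
  0 < fst (w i) * snd (w (S i)) - snd (w i) * fst (w (S i)).

Lemma track (w : nat -> R*R) a : good_seq w -> U0 a = fst (w O) -> U1 a = snd (w O) ->
  forall i, U0 (Nat.iter i beta a) = fst (w i) /\ U1 (Nat.iter i beta a) = snd (w i).
Proof.
  intros G H0 H1 i. induction i as [|i [IH1 IH2]]; [simpl; auto|].
  change (Nat.iter (S i) beta a) with (beta (Nat.iter i beta a)).
  destruct (beta_U (Nat.iter i beta a)) as [E1 E2]. rewrite E1, E2. unfold W0, W1. rewrite IH1, IH2.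
  destruct (G i) as [C [L X]].
  destruct (G (S i)) as [C' _].
  destruct (W_uniq _ _ _ _ C C' L X) as [Z1 Z2]. auto.
Qed.

Lemma seq_sum (n : nat) (w : nat -> R*R) : (1 <= n)%nat -> good_seq w -> w n = w O ->
  exists a (m : Z), Nat.iter n beta a = a + 2*PI*IZR m /\
  sum_f_R0 (fun i => fst (w i) * fst (w (S i)) + snd (w i) * snd (w (S i))) (pred n) =
  IZR m * (Phi (2*PI) - Phi 0) - INR n * Hf 0.
Proof.
  intros Hn G Hp.
  destruct (G O) as [C0 _].
  destruct (angle_exists r _ _ Hr C0) as [a [A1 A2]].
  pose proof (track w a G A1 A2) as T.
  destruct (T n) as [Tn1 Tn2].
  assert (Hc: cos (Nat.iter n beta a) = cos a).
  { apply Rmult_eq_reg_l with r; [|lra]. fold (U0 (Nat.iter n beta a)). rewrite Tn1, Hp. auto. }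
  assert (Hs: sin (Nat.iter n beta a) = sin a).
  { apply Rmult_eq_reg_l with r; [|lra]. fold (U1 (Nat.iter n beta a)). rewrite Tn2, Hp. auto. }
  destruct (angle_eq _ _ Hc Hs) as [m Hm].
  exists a, m. split; [exact Hm|].
  rewrite <- (sum_eq (fun i => fU (Nat.iter i beta a))).
  - rewrite orbit_sum. replace (S (pred n)) with n by lia. rewrite Hm, Phi_Z. ring.
  - intros i _. unfold fU. change (beta (Nat.iter i beta a)) with (Nat.iter (S i) beta a).
    destruct (T i) as [E1 E2]. destruct (T (S i)) as [E3 E4]. rewrite E1, E2, E3, E4. reflexivity.
Qed.

Lemma core_sum (n : nat) (w v : nat -> R*R) : (1 <= n)%nat -> good_seq w -> w n = w O ->
  good_seq v -> v n = v O ->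
  sum_f_R0 (fun i => fst (w i) * fst (w (S i)) + snd (w i) * snd (w (S i))) (pred n) =
  sum_f_R0 (fun i => fst (v i) * fst (v (S i)) + snd (v i) * snd (v (S i))) (pred n).
Proof.
  intros Hn Gw Pw Gv Pv.
  destruct (seq_sum n w Hn Gw Pw) as [a [m [Ha Sa]]].
  destruct (seq_sum n v Hn Gv Pv) as [b [m' [Hb Sb]]].
  rewrite Sa, Sb.
  assert (m = m').
  { apply (rot_lemma (Nat.iter n beta) (2*PI)) with (x := a) (y := b).
    - pose proof PI_RGT_0. lra.
    - apply iter_mono.
    - apply iter_per.
    - rewrite Ha. ring.
    - rewrite Hb. ring. }
  subst. reflexivity.
Qed.

End Core.


Lemma inside_form (O : point) (a b c r : R) : 0 < r -> is_ellipse_params a b c ->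
  ellipse_inside_circle O a b c r ->
  forall X Y, X <> 0 \/ Y <> 0 -> X*X+Y*Y < r*r*(a*X*X+2*b*X*Y+c*Y*Y).
Proof.
  intros Hr [Ha Hd] Hin X Y HXY.
  set (q := a*X*X+2*b*X*Y+c*Y*Y).
  assert (Hq: 0 < q).
  { assert (a*q = (a*X+b*Y)*(a*X+b*Y) + (a*c-b*b)*(Y*Y)) by (unfold q; ring).
    destruct HXY as [HX|HY].
    - destruct (Req_dec Y 0) as [HY|HY].
      + subst Y. assert (0 < X*X) by (apply Rsqr_pos_lt in HX; unfold Rsqr in HX; exact HX).
        replace q with (a*(X*X)) by (unfold q; ring). apply Rmult_lt_0_compat; lra.
      + assert (0 < Y*Y) by (apply Rsqr_pos_lt in HY; unfold Rsqr in HY; exact HY).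
        assert (0 < (a*c-b*b)*(Y*Y)) by (apply Rmult_lt_0_compat; lra).
        assert (0 <= (a*X+b*Y)*(a*X+b*Y)) by apply Rle_0_sqr.
        assert (0 < a*q) by lra. apply (Rmult_lt_reg_l a); lra.
    - assert (0 < Y*Y) by (apply Rsqr_pos_lt in HY; unfold Rsqr in HY; exact HY).
        assert (0 < (a*c-b*b)*(Y*Y)) by (apply Rmult_lt_0_compat; lra).
        assert (0 <= (a*X+b*Y)*(a*X+b*Y)) by apply Rle_0_sqr.
        assert (0 < a*q) by lra. apply (Rmult_lt_reg_l a); lra. }
  set (s := sqrt q).
  assert (Hs: 0 < s) by (apply sqrt_lt_R0; exact Hq).
  assert (Hss: s * s = q) by (apply sqrt_sqrt; lra).
  specialize (Hin (fst O + X/s, snd O + Y/s)).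
  assert (Hon: on_ellipse O a b c (fst O + X/s, snd O + Y/s)).
  { unfold on_ellipse. simpl.
    replace (fst O + X / s - fst O) with (X/s) by ring. replace (snd O + Y / s - snd O) with (Y/s) by ring.
    replace (a * (X / s) * (X / s) + 2 * b * (X / s) * (Y / s) + c * (Y / s) * (Y / s)) with (q/(s*s))
      by (unfold q; field; lra).
    rewrite Hss. field. lra. }
  specialize (Hin Hon). unfold vnorm, vsub, dot in Hin. simpl in Hin.
  replace (fst O + X / s - fst O) with (X/s) in Hin by ring. replace (snd O + Y / s - snd O) with (Y/s) in Hin by ring.
  replace (X / s * (X / s) + Y / s * (Y / s)) with ((X*X+Y*Y)/q) in Hin by (rewrite <- Hss; field; lra).
  assert (Hlt: (X*X+Y*Y)/q < r*r).
  { destruct (Rlt_or_le ((X*X+Y*Y)/q) (r*r)) as [|Hge]; [assumption|].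
    exfalso. assert (sqrt (r*r) <= sqrt ((X*X+Y*Y)/q)) by (apply sqrt_le_1_alt; exact Hge).
    rewrite sqrt_square in H by lra. lra. }
  apply Rmult_lt_reg_r with (/q). apply Rinv_0_lt_compat; lra.
  replace (r * r * q * / q) with (r*r) by (field; lra). exact Hlt.
Qed.

Definition Dl (a b c : R) := a*c - b*b.
Definition N11 (a b c r : R) := r*r*Dl a b c + a - c.
Definition N12 (b : R) := 2*b.
Definition N22 (a b c r : R) := r*r*Dl a b c + c - a.
Definition KK (a b c r : R) := r*r*(a + c - r*r*Dl a b c).

Lemma HP_ok (O : point) (a b c r : R) : 0 < r -> is_ellipse_params a b c ->
  ellipse_inside_circle O a b c r ->
  forall x y, x*x+y*y = r*r -> 0 < Pq (N11 a b c r) (N12 b) (N22 a b c r) x y /\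
    KK a b c r * KK a b c r < Pq (N11 a b c r) (N12 b) (N22 a b c r) x y * Pq (N11 a b c r) (N12 b) (N22 a b c r) x y.
Proof.
  intros Hr He Hin x y Hxy. pose proof (inside_form O a b c r Hr He Hin) as IF.
  destruct He as [Ha Hd].
  assert (Hr2: 0 < r*r) by nra.
  assert (Hu: x <> 0 \/ y <> 0).
  { destruct (Req_dec x 0); [|auto]. destruct (Req_dec y 0); [|auto]. subst. lra. }
  set (X := c*x - b*y). set (Y := -b*x + a*y).
  assert (HXY: X <> 0 \/ Y <> 0).
  { destruct (Req_dec X 0) as [HX|HX]; [|auto]. destruct (Req_dec Y 0) as [HY|HY]; [|auto].
    exfalso. assert (E1: a*X + b*Y = (a*c-b*b)*x) by (unfold X, Y; ring).
    assert (E2: b*X + c*Y = (a*c-b*b)*y) by (unfold X, Y; ring).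
    rewrite HX, HY in E1, E2.
    assert (x = 0). { apply (Rmult_eq_reg_l (a*c-b*b)); lra. }
    assert (y = 0). { apply (Rmult_eq_reg_l (a*c-b*b)); lra. }
    destruct Hu; contradiction. }
  specialize (IF X Y HXY).
  set (adj := c*x*x - 2*b*x*y + a*y*y).
  assert (EA: a*X*X+2*b*X*Y+c*Y*Y = (a*c-b*b)*adj) by (unfold X, Y, adj; ring).
  rewrite EA in IF.
  assert (Hc: 0 < c).
  { destruct (Rle_or_lt c 0); [|auto]. assert (a*c <= 0) by nra. assert (0 <= b*b) by nra. lra. }
  assert (Hadj: 0 < adj).
  { assert (c*adj = (c*x-b*y)*(c*x-b*y) + (a*c-b*b)*(y*y)) by (unfold adj; ring).
    destruct (Req_dec y 0) as [Hy|Hy].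
    - subst y. destruct Hu as [Hx|Hx]; [|lra].
      assert (0 < x*x) by (apply Rsqr_pos_lt in Hx; unfold Rsqr in Hx; exact Hx).
      replace adj with (c*(x*x)) by (unfold adj; ring). apply Rmult_lt_0_compat; lra.
    - assert (0 < y*y) by (apply Rsqr_pos_lt in Hy; unfold Rsqr in Hy; exact Hy).
      assert (0 < (a*c-b*b)*(y*y)) by (apply Rmult_lt_0_compat; lra).
      assert (0 <= (c*x-b*y)*(c*x-b*y)) by apply Rle_0_sqr.
      apply (Rmult_lt_reg_l c); lra. }
  assert (CS: adj*adj + (x*Y - y*X)*(x*Y - y*X) = (x*x+y*y)*(X*X+Y*Y)) by (unfold adj, X, Y; ring).
  rewrite Hxy in CS.
  assert (Hsq: 0 <= (x*Y - y*X)*(x*Y - y*X)) by apply Rle_0_sqr.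
  assert (Hlt: adj*adj < r*r*(r*r*((a*c-b*b)*adj))).
  { assert (r*r*(X*X+Y*Y) < r*r*(r*r*((a*c-b*b)*adj))) by (apply Rmult_lt_compat_l; lra). lra. }
  assert (Hadj2: adj < r*r*r*r*(a*c-b*b)).
  { apply (Rmult_lt_reg_r adj); [lra|]. replace (r*r*r*r*(a*c-b*b)*adj) with (r*r*(r*r*((a*c-b*b)*adj))) by ring. lra. }
  assert (E1: Pq (N11 a b c r) (N12 b) (N22 a b c r) x y - KK a b c r = 2*(r*r*r*r*(a*c-b*b) - adj)).
  { unfold Pq, N11, N12, N22, KK, Dl, adj. clear - Hxy. nsatz. }
  assert (E2: Pq (N11 a b c r) (N12 b) (N22 a b c r) x y + KK a b c r = 2*(a*x*x+2*b*x*y+c*y*y)).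
  { unfold Pq, N11, N12, N22, KK, Dl. clear - Hxy. nsatz. }
  assert (HA: 0 < a*x*x+2*b*x*y+c*y*y).
  { assert (a*(a*x*x+2*b*x*y+c*y*y) = (a*x+b*y)*(a*x+b*y) + (a*c-b*b)*(y*y)) by ring.
    destruct (Req_dec y 0) as [Hy|Hy].
    - subst y. destruct Hu as [Hx|Hx]; [|lra].
      assert (0 < x*x) by (apply Rsqr_pos_lt in Hx; unfold Rsqr in Hx; exact Hx).
      replace (a*x*x+2*b*x*0+c*0*0) with (a*(x*x)) by ring. apply Rmult_lt_0_compat; lra.
    - assert (0 < y*y) by (apply Rsqr_pos_lt in Hy; unfold Rsqr in Hy; exact Hy).
      assert (0 < (a*c-b*b)*(y*y)) by (apply Rmult_lt_0_compat; lra).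
      assert (0 <= (a*x+b*y)*(a*x+b*y)) by apply Rle_0_sqr.
      apply (Rmult_lt_reg_l a); lra. }
  set (P := Pq (N11 a b c r) (N12 b) (N22 a b c r) x y) in *. set (k := KK a b c r) in *.
  split; [lra|]. assert (0 < P - k) by lra. assert (0 < P + k) by lra.
  assert (0 < (P-k)*(P+k)) by (apply Rmult_lt_0_compat; lra). nra.
Qed.

Lemma on_circle_dot (O : point) r p : 0 < r -> on_circle O r p ->
  fst (vsub p O) * fst (vsub p O) + snd (vsub p O) * snd (vsub p O) = r*r.
Proof.
  intros Hr H. unfold on_circle, vnorm, dot in H.
  assert (0 <= fst (vsub p O) * fst (vsub p O) + snd (vsub p O) * snd (vsub p O)).
  { pose proof (Rle_0_sqr (fst (vsub p O))). pose proof (Rle_0_sqr (snd (vsub p O))). unfold Rsqr in *. lra. }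
  rewrite <- H. rewrite sqrt_sqrt; auto.
Qed.

Lemma Q_pos (a b c X Y : R) : is_ellipse_params a b c -> (X <> 0 \/ Y <> 0) -> 0 < a*X*X+2*b*X*Y+c*Y*Y.
Proof.
  intros [Ha Hd] Hu.
  assert (a*(a*X*X+2*b*X*Y+c*Y*Y) = (a*X+b*Y)*(a*X+b*Y) + (a*c-b*b)*(Y*Y)) by ring.
  destruct (Req_dec Y 0) as [Hy|Hy].
  - subst Y. destruct Hu as [Hx|Hx]; [|lra].
    assert (0 < X*X) by (apply Rsqr_pos_lt in Hx; unfold Rsqr in Hx; exact Hx).
    replace (a*X*X+2*b*X*0+c*0*0) with (a*(X*X)) by ring. apply Rmult_lt_0_compat; lra.
  - assert (0 < Y*Y) by (apply Rsqr_pos_lt in Hy; unfold Rsqr in Hy; exact Hy).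
    assert (0 < (a*c-b*b)*(Y*Y)) by (apply Rmult_lt_0_compat; lra).
    assert (0 <= (a*X+b*Y)*(a*X+b*Y)) by apply Rle_0_sqr.
    apply (Rmult_lt_reg_l a); lra.
Qed.

Lemma tangent_bil (O : point) (a b c r : R) p q : 0 < r -> is_ellipse_params a b c ->
  on_circle O r p -> on_circle O r q -> tangent_line O a b c p q ->
  bil (N11 a b c r) (N12 b) (N22 a b c r) (fst (vsub p O)) (snd (vsub p O)) (fst (vsub q O)) (snd (vsub q O)) = KK a b c r.
Proof.
  intros Hr He Hp Hq [Hpq [t0 [Ht0 Hu]]].
  pose proof (on_circle_dot O r p Hr Hp) as Cp. pose proof (on_circle_dot O r q Hr Hq) as Cq.
  unfold vsub in *. simpl in *.
  set (x0 := fst p - fst O) in *. set (y0 := snd p - snd O) in *.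
  set (x1 := fst q - fst O) in *. set (y1 := snd q - snd O) in *.
  set (d0 := x1 - x0). set (d1 := y1 - y0).
  assert (Hd: d0 <> 0 \/ d1 <> 0).
  { destruct (Req_dec d0 0) as [H0|H0]; [|auto]. destruct (Req_dec d1 0) as [H1|H1]; [|auto].
    exfalso. apply Hpq. destruct p as [p0 p1]. destruct q as [q0 q1]. simpl in *.
    unfold d0, d1, x0, x1, y0, y1 in *. simpl in *. f_equal; lra. }
  set (al := a*d0*d0+2*b*d0*d1+c*d1*d1).
  set (be := a*x0*d0 + b*(x0*d1+y0*d0) + c*y0*d1).
  set (ga := a*x0*x0+2*b*x0*y0+c*y0*y0 - 1).
  assert (Hal: 0 < al) by (apply Q_pos; auto).
  assert (Heq: forall t, on_ellipse O a b c (fst p + t * (fst q - fst p), snd p + t * (snd q - snd p)) <->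
                        al*t*t + 2*be*t + ga = 0).
  { intro t. unfold on_ellipse. simpl.
    replace (fst p + t * (fst q - fst p) - fst O) with (x0 + t*d0) by (unfold d0, x1, x0; ring).
    replace (snd p + t * (snd q - snd p) - snd O) with (y0 + t*d1) by (unfold d1, y1, y0; ring).
    unfold al, be, ga. split; intro H; lra. }
  apply Heq in Ht0.
  set (t1 := -2*be/al - t0).
  assert (Ht1: al*t1*t1 + 2*be*t1 + ga = 0).
  { unfold t1. replace (al * (-2*be/al - t0) * (-2*be/al - t0) + 2*be*(-2*be/al - t0) + ga)
      with (al*t0*t0 + 2*be*t0 + ga) by (field; lra). exact Ht0. }
  apply Heq in Ht1. specialize (Hu t1 Ht1).
  assert (Ht: t0 = - be/al).
  { unfold t1 in Hu. replace (-be/al) with ((-2*be/al)/2) by (field; lra). lra. }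
  assert (Disc: be*be - al*ga = 0).
  { rewrite Ht in Ht0.
    assert (E: al*(al*(-be/al)*(-be/al) + 2*be*(-be/al) + ga) = -(be*be - al*ga)) by (field; lra).
    rewrite Ht0 in E. lra. }
  assert (Id: 2*(r*r)*(be*be - al*ga) = -(d0*d0+d1*d1)*(bil (N11 a b c r) (N12 b) (N22 a b c r) x0 y0 x1 y1 - KK a b c r)).
  { unfold be, al, ga, d0, d1, bil, mx, my, N11, N12, N22, KK, Dl. clear - Cp Cq. nsatz. }
  rewrite Disc in Id.
  assert (0 < d0*d0+d1*d1).
  { destruct Hd as [Hd|Hd]; [assert (0 < d0*d0) by (apply Rsqr_pos_lt in Hd; exact Hd); pose proof (Rle_0_sqr d1); unfold Rsqr in *; lra
                            |assert (0 < d1*d1) by (apply Rsqr_pos_lt in Hd; exact Hd); pose proof (Rle_0_sqr d0); unfold Rsqr in *; lra]. }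
  assert ((d0*d0+d1*d1)*(bil (N11 a b c r) (N12 b) (N22 a b c r) x0 y0 x1 y1 - KK a b c r) = 0) by lra.
  apply Rmult_integral in H0. destruct H0; lra.
Qed.

Definition hat (O : point) (n : nat) (u : nat -> point) (i : nat) : point := vsub (u (i mod n)) O.

Lemma mod_S n i : (n <> 0)%nat -> S (i mod n) mod n = S i mod n.
Proof.
  intro H. replace (S (i mod n)) with (i mod n + 1)%nat by lia. replace (S i) with (i + 1)%nat by lia.
  apply Nat.Div0.add_mod_idemp_l.
Qed.

Lemma vsub_inj (p q O : point) : p <> q -> vsub p O <> vsub q O.
Proof.
  intros H E. apply H. destruct p as [p0 p1], q as [q0 q1]. unfold vsub in E. simpl in E.
  injection E as E1 E2. f_equal; lra.
Qed.

Lemma hat_props (O : point) (r a b c : R) (n : nat) (u : nat -> point) :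
  0 < r -> is_ellipse_params a b c -> (1 <= n)%nat -> poncelet_ngon O r a b c n u ->
  forall i,
  fst (hat O n u i) * fst (hat O n u i) + snd (hat O n u i) * snd (hat O n u i) = r*r /\
  bil (N11 a b c r) (N12 b) (N22 a b c r) (fst (hat O n u i)) (snd (hat O n u i))
      (fst (hat O n u (S i))) (snd (hat O n u (S i))) = KK a b c r /\
  hat O n u i <> hat O n u (S (S i)).
Proof.
  intros Hr He Hn Hp i.
  assert (Hn0: (n <> 0)%nat) by lia.
  assert (Hj: (i mod n < n)%nat) by (apply Nat.mod_upper_bound; lia).
  destruct (Hp _ Hj) as [C [T D]].
  assert (Hj2: (S (i mod n) mod n < n)%nat) by (apply Nat.mod_upper_bound; lia).
  destruct (Hp _ Hj2) as [C2 _].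
  rewrite mod_S in T, C2 by exact Hn0.
  assert (E2: S (S (i mod n)) mod n = S (S i) mod n).
  { replace (S (S (i mod n))) with (2 + i mod n)%nat by lia. rewrite Nat.Div0.add_mod_idemp_r. f_equal. }
  rewrite E2 in D.
  unfold hat. split; [|split].
  - apply on_circle_dot; auto.
  - apply tangent_bil; auto.
  - apply vsub_inj. exact D.
Qed.

Lemma orient_prop (n11 n12 n22 K r : R) (Hr : 0 < r)
  (HP : forall x y, x*x+y*y = r*r -> 0 < Pq n11 n12 n22 x y /\ K*K < Pq n11 n12 n22 x y * Pq n11 n12 n22 x y)
  (h : nat -> point) :
  (forall i, fst (h i) * fst (h i) + snd (h i) * snd (h i) = r*r /\
     bil n11 n12 n22 (fst (h i)) (snd (h i)) (fst (h (S i))) (snd (h (S i))) = K /\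
     h i <> h (S (S i))) ->
  forall i, 0 < cross (h i) (h (S i)) * cross (h O) (h 1%nat).
Proof.
  intros Hh.
  assert (Step: forall i, 0 < cross (h (S i)) (h (S (S i))) * cross (h i) (h (S i))).
  { intro i. destruct (Hh i) as [C0 [B0 D0]]. destruct (Hh (S i)) as [C1 [B1 _]].
    destruct (Hh (S (S i))) as [C2 _].
    rewrite bil_sym in B0.
    assert (Dx: fst (h i) <> fst (h (S (S i))) \/ snd (h i) <> snd (h (S (S i)))).
    { destruct (Req_dec (fst (h i)) (fst (h (S (S i))))) as [E1|E1]; [|auto].
      destruct (Req_dec (snd (h i)) (snd (h (S (S i))))) as [E2|E2]; [|auto].
      exfalso. apply D0. destruct (h i), (h (S (S i))). simpl in *. subst. reflexivity. }
    pose proof (Dd_opp n11 n12 n22 K r HP _ _ _ _ _ _ C1 C0 C2 B0 B1 Dx) as O1.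
    pose proof (sign_lemma n11 n12 n22 K r Hr HP _ _ _ _ C1 C2 B1) as S2.
    pose proof (sign_lemma n11 n12 n22 K r Hr HP _ _ _ _ C1 C0 B0) as S1.
    rewrite O1 in S2. unfold cross.
    set (D := Dd n11 n12 n22 (fst (h (S i))) (snd (h (S i))) (fst (h i)) (snd (h i))) in *.
    set (c2 := fst (h (S i)) * snd (h (S (S i))) - snd (h (S i)) * fst (h (S (S i)))) in *.
    set (c1 := fst (h i) * snd (h (S i)) - snd (h i) * fst (h (S i))).
    assert (E: fst (h (S i)) * snd (h i) - snd (h (S i)) * fst (h i) = - c1) by (unfold c1; ring).
    rewrite E in S1.
    assert (0 < D * c2) by lra. assert (0 < D * c1) by lra.
    assert (0 < (D*c2)*(D*c1)) by (apply Rmult_lt_0_compat; lra).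
    destruct (Rlt_or_le 0 (c2*c1)); [auto|]. exfalso.
    assert (0 <= D*D) by apply Rle_0_sqr. nra. }
  intro i. induction i as [|i IH].
  - destruct (Hh O) as [C0 [B0 _]]. destruct (Hh 1%nat) as [C1 _].
    pose proof (sign_lemma n11 n12 n22 K r Hr HP _ _ _ _ C0 C1 B0) as S0.
    unfold cross. set (c := fst (h 0%nat) * snd (h 1%nat) - snd (h 0%nat) * fst (h 1%nat)) in *.
    assert (c <> 0) by (intro Z; rewrite Z in S0; lra).
    assert (0 < c*c) by (apply Rsqr_pos_lt in H; exact H). exact H0.
  - specialize (Step i). set (a := cross (h i) (h (S i))) in *. set (b := cross (h (S i)) (h (S (S i)))) in *.
    set (c := cross (h O) (h 1%nat)) in *.
    destruct (Rlt_or_le 0 (b*c)); [auto|]. exfalso.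
    assert (0 < (b*a)*(a*c)) by (apply Rmult_lt_0_compat; lra).
    assert (0 <= a*a) by apply Rle_0_sqr. nra.
Qed.

Definition Ssum (n : nat) (h : nat -> point) :=
  sum_f_R0 (fun i => fst (h i) * fst (h (S i)) + snd (h i) * snd (h (S i))) (pred n).

Lemma cos_sum_eq (O : point) (r a b c : R) (n : nat) (u : nat -> point) :
  0 < r -> (1 <= n)%nat -> poncelet_ngon O r a b c n u ->
  cos_angle_sum O n u = Ssum n (hat O n u) * / (r*r).
Proof.
  intros Hr Hn Hp. unfold cos_angle_sum, Ssum. rewrite Rmult_comm, scal_sum. apply sum_eq.
  intros i Hi. assert (Hin: (i < n)%nat) by lia.
  assert (Hj: (S i mod n < n)%nat) by (apply Nat.mod_upper_bound; lia).
  destruct (Hp _ Hin) as [C1 _]. destruct (Hp _ Hj) as [C2 _].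
  unfold hat. rewrite (Nat.mod_small i n Hin).
  pose proof (on_circle_dot O r _ Hr C1) as D1. pose proof (on_circle_dot O r _ Hr C2) as D2.
  unfold angle. unfold on_circle in C1, C2. rewrite C1, C2.
  unfold dot. set (p := vsub (u i) O) in *. set (q := vsub (u (S i mod n)) O) in *.
  assert (Hr2: 0 < r*r) by nra.
  assert (L: (fst p * fst q + snd p * snd q)*(fst p * fst q + snd p * snd q) +
             (fst p * snd q - snd p * fst q)*(fst p * snd q - snd p * fst q) = (r*r)*(r*r)).
  { replace ((r*r)*(r*r)) with ((fst p*fst p+snd p*snd p)*(fst q*fst q + snd q*snd q)) by (rewrite D1, D2; ring). ring. }
  assert (Hsq: 0 <= (fst p * snd q - snd p * fst q)*(fst p * snd q - snd p * fst q)) by apply Rle_0_sqr.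
  set (d := fst p * fst q + snd p * snd q) in *.
  assert (Hb: -1 <= d / (r*r) <= 1).
  { assert (d*d <= (r*r)*(r*r)) by lra.
    assert (-(r*r) <= d <= r*r) by nra.
    split; [apply (Rmult_le_reg_r (r*r)); [lra|]; unfold Rdiv; rewrite Rmult_assoc, Rinv_l; lra
           |apply (Rmult_le_reg_r (r*r)); [lra|]; unfold Rdiv; rewrite Rmult_assoc, Rinv_l; lra]. }
  rewrite cos_acos by exact Hb. reflexivity.
Qed.

Definition refl (p : point) : point := (fst p, - snd p).

Lemma Ssum_refl n h : Ssum n (fun i => refl (h i)) = Ssum n h.
Proof. unfold Ssum, refl. apply sum_eq. intros i _. simpl. ring. Qed.

Theorem theorem4p1 (O : point) (r a b c : R) (n : nat) (u : nat -> point) :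
  (3 <= n)%nat ->
  0 < r ->
  is_ellipse_params a b c ->
  ellipse_inside_circle O a b c r ->
  poncelet_ngon O r a b c n u ->
  forall v : nat -> point,
    in_poncelet_family O r a b c n u v ->
    cos_angle_sum O n v = cos_angle_sum O n u.
Proof.
  intros Hn Hr He Hin Hpu v [Hpv Hcr].
  assert (Hn1: (1 <= n)%nat) by lia.
  pose proof (HP_ok O a b c r Hr He Hin) as HP.
  rewrite (cos_sum_eq O r a b c n u Hr Hn1 Hpu), (cos_sum_eq O r a b c n v Hr Hn1 Hpv).
  f_equal.
  pose proof (hat_props O r a b c n u Hr He Hn1 Hpu) as Fu.
  pose proof (hat_props O r a b c n v Hr He Hn1 Hpv) as Fv.
  pose proof (orient_prop _ _ _ _ _ Hr HP _ Fu) as Ou.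
  pose proof (orient_prop _ _ _ _ _ Hr HP _ Fv) as Ov.
  assert (H0: forall w : nat -> point, hat O n w 0%nat = vsub (w 0%nat) O).
  { intro w. unfold hat. rewrite Nat.Div0.mod_0_l. reflexivity. }
  assert (Hper: forall w : nat -> point, hat O n w n = hat O n w 0%nat).
  { intro w. unfold hat. rewrite Nat.Div0.mod_same, Nat.Div0.mod_0_l. reflexivity. }
  assert (H1: forall w : nat -> point, hat O n w 1%nat = vsub (w (1 mod n)%nat) O) by reflexivity.
  rewrite <- (H0 u), <- (H0 v), <- (H1 u), <- (H1 v) in Hcr.
  set (cu := cross (hat O n u 0%nat) (hat O n u 1%nat)) in *.
  set (cv := cross (hat O n v 0%nat) (hat O n v 1%nat)) in *.
  destruct (Rlt_or_le 0 cu) as [Hcu|Hcu].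
  - assert (Hcv: 0 < cv) by nra.
    assert (Gu: good_seq (N11 a b c r) (N12 b) (N22 a b c r) (KK a b c r) r (hat O n u)).
    { intro i. destruct (Fu i) as [A [B _]]. split; [exact A|split; [exact B|]].
      specialize (Ou i). fold cu in Ou. unfold cross in Ou.
      destruct (Rlt_or_le 0 (fst (hat O n u i) * snd (hat O n u (S i)) - snd (hat O n u i) * fst (hat O n u (S i)))); [auto|].
      exfalso. nra. }
    assert (Gv: good_seq (N11 a b c r) (N12 b) (N22 a b c r) (KK a b c r) r (hat O n v)).
    { intro i. destruct (Fv i) as [A [B _]]. split; [exact A|split; [exact B|]].
      specialize (Ov i). fold cv in Ov. unfold cross in Ov.
      destruct (Rlt_or_le 0 (fst (hat O n v i) * snd (hat O n v (S i)) - snd (hat O n v i) * fst (hat O n v (S i)))); [auto|].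
      exfalso. nra. }
    symmetry. exact (core_sum _ _ _ _ _ Hr HP n _ _ Hn1 Gu (Hper u) Gv (Hper v)).
  - assert (Hcu': cu < 0) by (destruct Hcu; [auto| rewrite H in Hcr; lra]).
    assert (Hcv: cv < 0) by nra.
    assert (HP': forall x y, x*x+y*y = r*r -> 0 < Pq (N11 a b c r) (- N12 b) (N22 a b c r) x y /\
       KK a b c r * KK a b c r < Pq (N11 a b c r) (- N12 b) (N22 a b c r) x y * Pq (N11 a b c r) (- N12 b) (N22 a b c r) x y).
    { intros x y Hxy. assert (E: Pq (N11 a b c r) (- N12 b) (N22 a b c r) x y = Pq (N11 a b c r) (N12 b) (N22 a b c r) x (-y))
        by (unfold Pq; ring).
      rewrite E. apply HP. lra. }
    assert (Gen: forall w, (forall i, fst (hat O n w i) * fst (hat O n w i) + snd (hat O n w i) * snd (hat O n w i) = r*r /\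
        bil (N11 a b c r) (N12 b) (N22 a b c r) (fst (hat O n w i)) (snd (hat O n w i))
          (fst (hat O n w (S i))) (snd (hat O n w (S i))) = KK a b c r /\ hat O n w i <> hat O n w (S (S i))) ->
        (forall i, 0 < cross (hat O n w i) (hat O n w (S i)) * cross (hat O n w 0%nat) (hat O n w 1%nat)) ->
        cross (hat O n w 0%nat) (hat O n w 1%nat) < 0 ->
        good_seq (N11 a b c r) (- N12 b) (N22 a b c r) (KK a b c r) r (fun i => refl (hat O n w i))).
    { intros w Fw Ow Cw i. destruct (Fw i) as [A [B _]]. unfold refl. cbn [fst snd]. split; [rewrite <- A; ring|split].
      - rewrite <- B. unfold bil, mx, my. ring.
      - specialize (Ow i). unfold cross in Ow, Cw.
        set (c0 := fst (hat O n w 0%nat) * snd (hat O n w 1%nat) - snd (hat O n w 0%nat) * fst (hat O n w 1%nat)) in *.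
        destruct (Rlt_or_le 0 (fst (hat O n w i) * - snd (hat O n w (S i)) - - snd (hat O n w i) * fst (hat O n w (S i)))); [auto|].
        exfalso. nra. }
    pose proof (core_sum _ _ _ _ _ Hr HP' n _ _ Hn1 (Gen u Fu Ou Hcu') ltac:(simpl; rewrite Hper; reflexivity)
                 (Gen v Fv Ov Hcv) ltac:(simpl; rewrite Hper; reflexivity)) as CS.
    assert (CS' : Ssum n (fun i => refl (hat O n u i)) = Ssum n (fun i => refl (hat O n v i))) by exact CS.
    rewrite !Ssum_refl in CS'. symmetry. exact CS'.
Qed.
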